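(* Let $\mathcal P\subset\mathbb R^n$ be an $n$-dimensional convex polytope and consider $\dot x=Ax+a+Bu$, $x\in\mathcal P$, with $\operatorname{rank}(B)=n-1$, $(A,B)$ controllable and $\operatorname{int}\mathcal P\cap\mathcal O=\emptyset$. Let $z\in\mathcal P$. If $\mathcal B_z\cap\mathcal P\subset\mathcal O$, then $\mathcal B_z\cap\mathcal P$ and $\mathcal P\setminus\mathcal B_z$ are $\mathcal P$-invariant.
   Context: $\mathcal B=\operatorname{Im}(B)$, $\mathcal O=\{x:Ax+a\in\mathcal B\}$; $\beta$ is the unit normal to $\mathcal B$ with $\beta^T(Ax+a)\le0$ on $\mathcal P$; $\mathcal B_z=\{x\in\mathbb R^n:\beta^Tx=\beta^Tz\}$. A set $\mathcal A\subseteq\mathcal P$ is $\mathcal P$-invariant if for every $x_0\in\mathcal A$ and every piecewise continuous control $u$, every trajectory $\phi^u_t(x_0)$ that lies in $\mathcal P$ on an interval $[0,T]$ ($T<\infty$) or $[0,\infty)$ lies in $\mathcal A$ on the same interval. *)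

(* Defs.v *)
From HB Require Import structures.
From mathcomp Require Import all_boot all_order all_algebra.
From mathcomp Require Import all_classical all_reals all_analysis.
Set Implicit Arguments. Unset Strict Implicit. Unset Printing Implicit Defensive.
Import Order.TTheory GRing.Theory Num.Theory.
Import numFieldNormedType.Exports.
Local Open Scope classical_set_scope.
Local Open Scope ring_scope.

Section Defs.
Variable R : realType.

Definition dotv (n : nat) (u v : 'cV[R]_n) : R := (u^T *m v) 0 0.

Definition full_dim_polytope (n : nat) (P : set 'cV[R]_n) : Prop :=
  (exists (k : nat) (C : 'M[R]_(k, n)) (d : 'cV[R]_k),
      P = [set x | forall i : 'I_k, (C *m x) i 0 <= d i 0])
  /\ (exists M : R, forall x, P x -> forall i : 'I_n, `|x i 0| <= M)
  /\ (interior P !=set0).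

Definition controllable (n m : nat) (A : 'M[R]_n) (B : 'M[R]_(n, m)) : Prop :=
  \rank (\mxrow_(k < n) (A ^+ k *m B)) = n.

Definition Oset (n m : nat) (A : 'M[R]_n) (a : 'cV[R]_n) (B : 'M[R]_(n, m))
  : set 'cV[R]_n := [set x | exists v : 'cV[R]_m, A *m x + a = B *m v].

Definition Bz (n : nat) (beta z : 'cV[R]_n) : set 'cV[R]_n :=
  [set x | dotv beta x = dotv beta z].

Definition piecewise_continuous (m : nat) (u : R -> 'cV[R]_m) : Prop :=
  (forall lo hi : R, exists s : seq R,
      forall t, lo <= t <= hi -> t \notin s -> {for t, continuous u})
  /\ (forall t : R, cvg (u x @[x --> t^'+]) /\ cvg (u x @[x --> t^'-])).

(* time domain [0,T] for finite T, [0,oo) for T = +oo *)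
Definition time_dom (T : \bar R) : set R :=
  [set t | 0 <= t /\ (t%:E <= T)%E].

Definition trajectory (n m : nat) (A : 'M[R]_n) (a : 'cV[R]_n)
  (B : 'M[R]_(n, m)) (u : R -> 'cV[R]_m) (x0 : 'cV[R]_n) (T : \bar R)
  (phi : R -> 'cV[R]_n) : Prop :=
  phi 0 = x0
  /\ {within time_dom T, continuous phi}
  /\ (forall T' : R, exists s : seq R, forall t : R,
        0 < t -> (t%:E < T)%E -> t < T' -> t \notin s ->
        is_derive t (1 : R) phi (A *m phi t + a + B *m u t)).

Definition P_invariant (n m : nat) (A : 'M[R]_n) (a : 'cV[R]_n)
  (B : 'M[R]_(n, m)) (P S : set 'cV[R]_n) : Prop :=
  S `<=` P /\
  forall x0, S x0 ->
  forall u : R -> 'cV[R]_m, piecewise_continuous u ->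
  forall (T : \bar R), (0 <= T)%E ->
  forall phi, trajectory A a B u x0 T phi ->
  (forall t, time_dom T t -> P (phi t)) ->
  forall t, time_dom T t -> S (phi t).

End Defs.

(* Main.v *)
Require Import Defs.
From HB Require Import structures.
From mathcomp Require Import all_boot all_order all_algebra.
From mathcomp Require Import all_classical all_reals all_analysis.
From mathcomp Require Import ring lra zify.
Set Implicit Arguments. Unset Strict Implicit. Unset Printing Implicit Defensive.
Import Order.TTheory GRing.Theory Num.Theory.
Import numFieldNormedType.Exports.
Local Open Scope ring_scope.
Local Open Scope classical_set_scope.
Local Open Scope ring_scope.
Section Cone.
Variable R : realFieldType.
Variable V : lmodType R.

Inductive incone (S : seq V) : V -> Prop :=
| ic0 : incone S 0
| icadd v l c : v \in S -> 0 <= c -> incone S l -> incone S (c *: v + l).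

Lemma incone_mem S v : v \in S -> incone S v.
Proof. by move=> vS; have := icadd vS ler01 (ic0 S); rewrite scale1r addr0. Qed.

Lemma incone_add S u w : incone S u -> incone S w -> incone S (u + w).
Proof.
move=> Iu Iw; elim: Iu => [|v l c vS c0 _ IH]; first by rewrite add0r.
by rewrite -addrA; apply: icadd.
Qed.

Lemma incone_scale S u c : 0 <= c -> incone S u -> incone S (c *: u).
Proof.
move=> c0; elim=> [|v l d vS d0 _ IH]; first by rewrite scaler0; apply: ic0.
by rewrite scalerDr scalerA; apply: icadd => //; rewrite mulr_ge0.
Qed.

Lemma incone_trans S S' u : (forall v, v \in S' -> incone S v) ->
  incone S' u -> incone S u.
Proof.
move=> H; elim=> [|v l c vS c0 _ IH]; first exact: ic0.
by apply: incone_add => //; apply: incone_scale => //; apply: H.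
Qed.

Lemma incone_cat_inv S1 S2 u : incone (S1 ++ S2) u ->
  exists u1 u2, [/\ incone S1 u1, incone S2 u2 & u = u1 + u2].
Proof.
elim=> [|v l c vS c0 _ [u1 [u2 [I1 I2 ->]]]].
  by exists 0, 0; rewrite addr0; split => //; apply: ic0.
move: vS; rewrite mem_cat => /orP[vS|vS].
  exists (c *: v + u1), u2; rewrite addrA; split=> //; exact: icadd.
exists u1, (c *: v + u2); rewrite addrCA; split=> //; exact: icadd.
Qed.

Lemma incone1_inv v u : incone [:: v] u -> exists2 c, 0 <= c & u = c *: v.
Proof.
elim=> [|w l c wS c0 _ [d d0 ->]]; first by exists 0; rewrite ?scale0r.
move: wS; rewrite inE => /eqP ->; exists (c + d); first by rewrite addr_ge0.
by rewrite scalerDl.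
Qed.

End Cone.

Lemma incone_map_inv (R : realFieldType) (V W : lmodType R) (f : {linear W -> V}) (S : seq W) u :
  incone [seq f x | x <- S] u -> exists2 w, incone S w & u = f w.
Proof.
elim=> [|v l c vS c0 _ [w Iw ->]]; first by exists 0; [apply: ic0|rewrite linear0].
case/mapP: vS => x xS ->; exists (c *: x + w); first exact: icadd.
by rewrite linearD linearZ.
Qed.
Lemma lohi (R : realFieldType) (lo hi : seq R) :
  (forall l u, l \in lo -> u \in hi -> l <= u) ->
  exists t, (forall l, l \in lo -> l <= t) /\ (forall u, u \in hi -> t <= u).
Proof.
elim: lo => [|l lo IH] H.
  elim: hi {H} => [|u hi [t [_ Ht]]]; first by exists 0.
  exists (Order.min u t); split=> // v; rewrite inE => /orP[/eqP->|vh].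
    by rewrite ge_min lexx.
  by rewrite ge_min Ht ?orbT.
have [t [Hl Hu]] : exists t, (forall l, l \in lo -> l <= t) /\ (forall u, u \in hi -> t <= u).
  by apply: IH => l' u l'lo uh; apply: H => //; rewrite inE l'lo orbT.
exists (Order.max l t); split.
  move=> v; rewrite inE => /orP[/eqP->|vl]; first by rewrite le_max lexx.
  by rewrite le_max Hl ?orbT.
move=> u uh; rewrite ge_max Hu // andbT; apply: H => //; exact: mem_head.
Qed.

Section FM.
Variable R : realFieldType.
Variable N : nat.
Notation aff := ('rV[R]_N * R^o)%type.

Definition ev (f : aff) (y : 'cV[R]_N) : R := (f.1 *m y) 0 0 - f.2.
Definition feas (S : seq aff) y := all (fun f => ev f y <= 0) S.

Lemma evDZ c f g y : ev (c *: f + g) y = c * ev f y + ev g y.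
Proof.
rewrite /ev /= mulmxDl -scalemxAl !mxE.
rewrite mulrBr; set a := (f.1 *m y) 0 0; set b := (g.1 *m y) 0 0.
rewrite /GRing.scale /=. 
by rewrite opprD !addrA; congr (_ - _); rewrite addrAC.
Qed.

Definition supp (j : nat) (r : 'rV[R]_N) := forall k : 'I_N, (j <= k)%N -> r 0 k = 0.

Lemma ev_shift f y t (j : 'I_N) :
  ev f (y + t *: delta_mx j 0) = ev f y + t * f.1 0 j.
Proof.
rewrite /ev mulmxDr -scalemxAr -colE !mxE.
by rewrite addrAC mulrC.
Qed.

Lemma supp0 r : supp 0 r -> r = 0.
Proof. by move=> H; apply/matrixP => i k; rewrite (ord1 i) H // mxE. Qed.

End FM.
Section FM2.
Variable R : realFieldType.
Variable N : nat.
Notation aff := ('rV[R]_N * R^o)%type.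

Lemma evZ c (f : aff) y : ev (c *: f) y = c * ev f y.
Proof. rewrite -[c *: f]addr0 evDZ /ev /= mul0mx !mxE. rewrite [X in _ + (_ - X)]/0 /=; by rewrite subrr addr0. Qed.

Variable j : 'I_N.
Definition cf (f : aff) := f.1 0 j.
Definition comb (p q : aff) : aff := (- cf q) *: p + (cf p) *: q.
Definition Spos S := [seq f <- S | 0 < cf f].
Definition Sneg S := [seq f <- S | cf f < 0].
Definition fm (S : seq aff) := [seq f <- S | cf f == 0] ++
  [seq comb p q | p <- Spos S, q <- Sneg S].

Lemma fm_cone S f : f \in fm S -> incone S f.
Proof.
rewrite mem_cat => /orP[|/allpairsP[[p q] [/= pS qS ->]]].
  by rewrite mem_filter => /andP[_]; apply: incone_mem.
move: pS qS; rewrite !mem_filter => /andP[pp pS] /andP[qn qS].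
apply: incone_add; apply: incone_scale; try by apply: incone_mem.
  by rewrite oppr_ge0 ltW.
by rewrite ltW.
Qed.

Lemma fm_supp S : (forall f, f \in S -> supp j.+1 f.1) ->
  forall f, f \in fm S -> supp j f.1.
Proof.
move=> H f; rewrite mem_cat => /orP[|/allpairsP[[p q] [/= pS qS ->]]].
  rewrite mem_filter => /andP[/eqP c0 fS] k; rewrite leq_eqVlt => /orP[/eqP jk|jk].
    by move: c0; rewrite /cf; have -> : j = k by apply: val_inj.
  exact: H.
move: pS qS; rewrite !mem_filter => /andP[pp pS] /andP[qn qS] k.
rewrite /comb /= !mxE leq_eqVlt => /orP[/eqP jk|jk].
  have -> : k = j by apply: val_inj.
  by rewrite /cf; ring.
by rewrite !(H p) // !(H q) // !mulr0 addr0.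
Qed.

Lemma fm_feas S y : feas (fm S) y -> exists t, feas S (y + t *: delta_mx j 0).
Proof.
move=> /allP Hf.
pose lo := [seq ev q y / (- cf q) | q <- Sneg S].
pose hi := [seq - ev p y / cf p | p <- Spos S].
have [t [Hl Hu]] : exists t, (forall l, l \in lo -> l <= t) /\ (forall u, u \in hi -> t <= u).
  apply: lohi => l u /mapP[q qS ->] /mapP[p pS ->].
  have cm : comb p q \in fm S by rewrite mem_cat; apply/orP; right; apply: allpairs_f.
  have := Hf _ cm; rewrite /comb evDZ evZ.
  move: pS qS; rewrite !mem_filter => /andP[pp _] /andP[qn _].
  move=> H; rewrite ler_pdivrMr ?oppr_gt0 //.
  rewrite mulrAC ler_pdivlMr //.
  nra.
exists t; apply/allP => f fS; rewrite ev_shift -/(cf f).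
case: (ltgtP (cf f) 0) => cfs.
- have : ev f y / (- cf f) \in lo by apply: map_f; rewrite mem_filter cfs.
  move/Hl; rewrite ler_pdivrMr ?oppr_gt0 // => H; nra.
- have : - ev f y / cf f \in hi by apply: map_f; rewrite mem_filter cfs.
  move/Hu; rewrite ler_pdivlMr // => H; nra.
- rewrite cfs mulr0 addr0; apply: Hf; rewrite mem_cat mem_filter cfs eqxx fS //.
Qed.
End FM2.
Section Alt.
Variable R : realFieldType.
Variable N : nat.
Notation aff := ('rV[R]_N * R^o)%type.

Lemma alt_gen k : (k <= N)%N -> forall S : seq aff,
  (forall f, f \in S -> supp k f.1) -> (forall y, ~~ feas S y) ->
  exists f, [/\ incone S f, f.1 = 0 & f.2 < 0].
Proof.
elim: k => [_|k IH kN] S Hs Hi.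
  have := Hi 0; rewrite /feas -has_predC => /hasP[f fS /=].
  rewrite -ltNge /ev mulmx0 mxE sub0r oppr_gt0 => f2.
  exists f; split=> //; first exact: incone_mem.
  exact/supp0/Hs.
pose j := Ordinal kN.
have [f [If f1 f2]] : exists f, [/\ incone (fm j S) f, f.1 = 0 & f.2 < 0].
  apply: IH; first exact: ltnW.
    exact: (@fm_supp R N j S Hs).
  move=> y; apply/negP => /fm_feas [t Ht].
  by have := Hi (y + t *: delta_mx j 0); rewrite Ht.
exists f; split=> //; apply: incone_trans If => v; exact: fm_cone.
Qed.

Lemma alt (S : seq aff) : (forall y, ~~ feas S y) ->
  exists f, [/\ incone S f, f.1 = 0 & f.2 < 0].
Proof.
apply: (@alt_gen N (leqnn N)) => f _ k kN.
by have := ltn_ord k; rewrite ltnNge kN.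
Qed.

Lemma incone_pair_inv (S : seq 'rV[R]_N) (u : aff) :
  incone [seq (r, 0 : R^o) | r <- S] u -> exists2 w, incone S w & u = (w, 0).
Proof.
elim=> [|v l c vS c0 _ [w Iw ->]]; first by exists 0; [apply: ic0|].
case/mapP: vS => x xS ->; exists (c *: x + w); first exact: icadd.
apply: injective_projections => //=. by rewrite scaler0 addr0.
Qed.

Lemma farkas (S : seq 'rV[R]_N) (g : 'rV[R]_N) :
  (forall y : 'cV[R]_N, (forall r, r \in S -> (r *m y) 0 0 <= 0) -> (g *m y) 0 0 <= 0) ->
  incone S g.
Proof.
move=> H.
pose S' : seq aff := [seq (r, 0 : R^o) | r <- S] ++ [:: (- g, -1 : R^o)].
have [f [If f1 f2]] : exists f, [/\ incone S' f, f.1 = 0 & f.2 < 0].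
  apply: alt => y; apply/negP; rewrite /feas all_cat => /andP[/allP H1].
  rewrite /= andbT /ev /= mulNmx mxE opprK.
  have Hy : forall r, r \in S -> (r *m y) 0 0 <= 0.
    by move=> r rS; have := H1 _ (map_f _ rS); rewrite /ev /= subr0.
  by have := H y Hy; lra.
have [u1 [u2 [I1 I2 fE]]] := incone_cat_inv If.
have [w Iw u1E] := incone_pair_inv I1.
have [c c0 u2E] := incone1_inv I2.
move: f1 f2; rewrite fE u1E u2E /= => f1 f2.
have cpos : 0 < c.
  have f2' : 0 + c * -1 < 0 := f2.
  lra.
have wE : w = c *: g by move/eqP: f1; rewrite scalerN addr_eq0 opprK => /eqP.
have -> : g = c^-1 *: w by rewrite wE scalerA mulVf ?gt_eqF // scale1r.
by apply: incone_scale => //; rewrite invr_ge0 ltW.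
Qed.
End Alt.
Lemma eps_exists (R : realFieldType) (I : eqType) (e : I -> R) (s : seq I) :
  (forall i, i \in s -> 0 < e i) -> exists2 eps, 0 < eps & forall i, i \in s -> eps <= e i.
Proof.
elim: s => [|a s IH] H; first by exists 1.
have [eps ep He] : exists2 eps, 0 < eps & forall i, i \in s -> eps <= e i.
  by apply: IH => i iS; apply: H; rewrite inE iS orbT.
exists (Order.min eps (e a)).
  by rewrite lt_min ep H // mem_head.
move=> i; rewrite inE => /orP[/eqP->|iS]; first by rewrite ge_min lexx orbT.
by rewrite ge_min He.
Qed.

Lemma entryDZ (R : realFieldType) m p (c : R) (A B : 'M[R]_(m,p)) i j :
  (c *: A + B) i j = c * A i j + B i j.
Proof. by rewrite !mxE. Qed.
Lemma entryB (R : realFieldType) m p (A B : 'M[R]_(m,p)) i j :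
  (A - B) i j = A i j - B i j.
Proof. by rewrite !mxE. Qed.
Lemma entryN (R : realFieldType) m p (A : 'M[R]_(m,p)) i j :
  (- A) i j = - A i j.
Proof. by rewrite !mxE. Qed.
Lemma entryR (R : realFieldType) m p q (A : 'M[R]_(m,p)) (y : 'M[R]_(p,q)) i j :
  (row i A *m y) 0 j = (A *m y) i j.
Proof. by rewrite -row_mul mxE. Qed.

Section Poly.
Variable R : realFieldType.
Variables (n k : nat) (C : 'M[R]_(k, n)) (d : 'cV[R]_k) (beta z : 'cV[R]_n).
Let inP (x : 'cV[R]_n) := forall i, (C *m x) i 0 <= d i 0.
Let act := [seq i <- enum 'I_k | (C *m z) i 0 == d i 0].
Let S := [seq row i C | i <- act] ++ [:: beta^T; - beta^T].

Lemma cone_bound l : inP z -> incone S l -> exists K, forall x, inP x ->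
  (l *m (x - z)) 0 0 <= K * `|(beta^T *m (x - z)) 0 0|.
Proof.
move=> Pz; elim=> [|v l' c vS c0 _ [K HK]].
  by exists 0 => x _; rewrite mul0mx mxE mul0r.
move: vS; rewrite mem_cat => /orP[/mapP[i iact ->]|].
  exists K => x Px; rewrite mulmxDl -scalemxAl entryDZ.
  have : (row i C *m (x - z)) 0 0 <= 0.
    rewrite entryR mulmxBr entryB.
    move: iact; rewrite mem_filter => /andP[/eqP -> _].
    by rewrite subr_le0; apply: Px.
  have := HK x Px; move: c0; rewrite /GRing.scale /=. nra.
rewrite !inE => /orP[/eqP->|/eqP->]; exists (K + c) => x Px;
  rewrite mulmxDl -scalemxAl entryDZ; have := HK x Px;
  set b := (beta^T *m (x - z)) 0 0; rewrite ?mulNmx ?entryN -/b.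
  by have := ler_norm b; move: c0; rewrite /GRing.scale /=; nra.
by have := ler_norm (- b); rewrite normrN; move: c0; rewrite /GRing.scale /=; nra.
Qed.
Lemma poly_bound (L : 'rV[R]_n) : inP z ->
  (forall x, inP x -> (beta^T *m x) 0 0 = (beta^T *m z) 0 0 ->
     (L *m x) 0 0 = (L *m z) 0 0) ->
  exists K, forall x, inP x ->
    `|(L *m (x - z)) 0 0| <= K * `|(beta^T *m (x - z)) 0 0|.
Proof.
move=> Pz HL.
have Hc : forall y : 'cV[R]_n, (forall r, r \in S -> (r *m y) 0 0 <= 0) -> (L *m y) 0 0 = 0.
  move=> y Hy.
  have b1 : (beta^T *m y) 0 0 <= 0.
    by apply: Hy; rewrite mem_cat; apply/orP; right; rewrite mem_head.
  have b2 : (- beta^T *m y) 0 0 <= 0.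
    by apply: Hy; rewrite mem_cat; apply/orP; right; rewrite !inE eqxx orbT.
  move: b2; rewrite mulNmx entryN => b2.
  have by0 : (beta^T *m y) 0 0 = 0 by lra.
  pose e i := if (C *m z) i 0 == d i 0 then 1
              else (d i 0 - (C *m z) i 0) / (`|(C *m y) i 0| + 1).
  have [eps ep He] : exists2 eps, 0 < eps & forall i, i \in enum 'I_k -> eps <= e i.
    apply: eps_exists => i _.
    rewrite /e; case: eqP => h; first exact: ltr01.
      apply: divr_gt0; last by rewrite ltr_pwDr ?ltr01 ?normr_ge0.
      by rewrite subr_gt0 lt_def eq_sym; apply/andP; split; [apply/eqP|apply: Pz].
  have Pzy : inP (z + eps *: y).
    move=> i; rewrite mulmxDr -scalemxAr addrC entryDZ.
    have := He i (mem_enum _ _); rewrite /e.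
    case: (eqVneq ((C *m z) i 0) (d i 0)) => h.
      move=> _; have : (C *m y) i 0 <= 0.
        rewrite -entryR; apply: Hy; rewrite mem_cat; apply/orP; left.
        by apply: map_f; rewrite mem_filter h eqxx mem_enum.
      by rewrite h; nra.
    rewrite ler_pdivlMr; last by rewrite ltr_pwDr ?ltr01 ?normr_ge0.
    have := ler_norm ((C *m y) i 0); nra.
  have Bz' : (beta^T *m (z + eps *: y)) 0 0 = (beta^T *m z) 0 0.
    by rewrite mulmxDr -scalemxAr addrC entryDZ by0 mulr0 add0r.
  have := HL _ Pzy Bz'; rewrite mulmxDr -scalemxAr addrC entryDZ => /eqP.
  by rewrite -subr_eq0 addrK mulf_eq0 gt_eqF //= => /eqP.
have F1 : incone S L by apply: farkas => y Hy; rewrite Hc.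
have F2 : incone S (- L) by apply: farkas => y Hy; rewrite mulNmx entryN Hc ?oppr0.
have [K1 H1] := cone_bound Pz F1.
have [K2 H2] := cone_bound Pz F2.
exists (`|K1| + `|K2|) => x Px.
have := H1 x Px; have := H2 x Px; rewrite mulNmx entryN.
set u := (L *m (x - z)) 0 0; set b := `|_|.
have b0 : 0 <= b by apply: normr_ge0.
have := ler_norm K1; have := ler_norm K2; have := normr_ge0 K1; have := normr_ge0 K2.
case: (lerP 0 u) => u0; [rewrite (ger0_norm u0) | rewrite (ltr0_norm u0)]; nra.
Qed.
End Poly.
Section Mono.
Variable R : realType.
Local Open Scope classical_set_scope.

Lemma mono_gen (f : R -> R) n : forall (s : seq R) (a b : R), (size s < n)%N ->
  a <= b -> {within `[a, b], continuous f} ->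
  (forall t, a < t < b -> t \notin s -> exists D, is_derive t 1 f D /\ D <= 0) ->
  f b <= f a.
Proof.
elim: n => [//|n IH] s a b sn ab fc fd.
case: (ltgtP a b) ab => // [ab _|-> _]; last exact: lexx.
case: (boolP (has (fun x => a < x < b) s)) => [/hasP[x xs /andP[ax xb]]|].
  pose s' := [seq y <- s | y != x].
  have s'n : (size s' < n)%N.
    rewrite size_filter; move: sn; rewrite -(count_predC (fun y => y != x) s).
    have : (0 < count (predC (fun y => y != x)) s)%N.
      by rewrite -has_count; apply/hasP; exists x => //=; rewrite negbK.
    move=> h1 h2; lia.
  have s'P : forall t, t != x -> t \notin s' -> t \notin s.
    by move=> t tx; rewrite mem_filter tx.
  have h1 : f x <= f a.
    apply: (IH s') => //; first exact: ltW.
      by apply: continuous_subspaceW fc; apply: subset_itv; rewrite ?bnd_simp ?lexx // ltW.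
    move=> t /andP[aT tx] ts'; apply: fd; first by rewrite aT (lt_trans tx xb).
    by apply: s'P => //; rewrite lt_eqF.
  have h2 : f b <= f x.
    apply: (IH s') => //; first exact: ltW.
      by apply: continuous_subspaceW fc; apply: subset_itv; rewrite ?bnd_simp ?lexx // ltW.
    move=> t /andP[xt tb] ts'; apply: fd; first by rewrite tb (lt_trans ax xt).
    by apply: s'P => //; rewrite gt_eqF.
  exact: le_trans h2 h1.
move/hasPn => hn.
have dfD : forall t, t \in `]a, b[%R -> is_derive t 1 f ('D_1 f t) /\ 'D_1 f t <= 0.
  move=> t; rewrite in_itv /= => tab.
  have tns : t \notin s by apply/negP => /hn; rewrite tab.
  have [D [dD D0]] := fd t tab tns.
  by rewrite derive_val; split.
have [c cab E] := MVT ab (fun t ht => (dfD t ht).1) fc.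
rewrite -subr_le0 E; have := (dfD c cab).2; have : 0 < b - a by rewrite subr_gt0.
nra.
Qed.

Lemma mono (f : R -> R) (s : seq R) (a b : R) :
  a <= b -> {within `[a, b], continuous f} ->
  (forall t, a < t < b -> t \notin s -> exists D, is_derive t 1 f D /\ D <= 0) ->
  f b <= f a.
Proof. exact: (@mono_gen f (size s).+1 s a b (ltnSn _)). Qed.
End Mono.
Section Gron.
Variable R : realType.
Local Open Scope classical_set_scope.

Lemma dexp (c u : R) : is_derive u 1 (fun s => expR (c * s)) (expR (c * u) * c).
Proof.
have h1 : is_derive u 1 (fun s : R => c * s) c.
  have := @is_deriveZ R R R id c u 1 1 (is_derive_id _ _).
  by move=> H; apply: (is_derive_eq H); rewrite /GRing.scale /= mulr1.
exact: (@is_derive1_comp R expR (fun s => c * s) u _ _ (is_derive_expR _) h1).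
Qed.

Lemma dw (e : R -> R) (c u D : R) : is_derive u 1 e D ->
  is_derive u 1 (fun s => expR (c * s) * (e s * e s))
    (expR (c * u) * (e u * D + e u * D) + (e u * e u) * (expR (c * u) * c)).
Proof.
move=> hD.
have hee : is_derive u 1 (e * e) (e u *: D + e u *: D) := is_deriveM hD hD.
have := is_deriveM (dexp c u) hee.
by move=> H; apply: (is_derive_eq H).
Qed.

Lemma cw (e : R -> R) (c : R) (A : set R) : {within A, continuous e} ->
  {within A, continuous (fun s => expR (c * s) * (e s * e s))}.
Proof.
move=> ce x.
have ce2 : {within A, continuous (fun s => e s * e s)}.
  by move=> y; apply: (@continuousM R (subspace A) (from_subspace A e) (from_subspace A e)); apply: ce.
have cx : {within A, continuous (fun s => expR (c * s))}.
  apply: continuous_subspaceT => y; apply: continuous_comp; last exact: continuous_expR.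
  by apply: (@continuousM R R (fun _ => c) id); [apply: cst_continuous|].
exact: (@continuousM R (subspace A) (from_subspace A (fun s => expR (c * s))) (from_subspace A (fun s => e s * e s)) x (cx x) (ce2 x)).
Qed.
End Gron.
Section Gron2.
Variable R : realType.
Local Open Scope classical_set_scope.

Lemma mono_up (f : R -> R) (s : seq R) (a b : R) :
  a <= b -> {within `[a, b], continuous f} ->
  (forall t, a < t < b -> t \notin s -> exists D, is_derive t 1 f D /\ 0 <= D) ->
  f a <= f b.
Proof.
move=> ab cf hd.
have := @mono R (fun x => - f x) s a b ab _ _.
rewrite lerN2; apply.
  by move=> x; apply: (@continuousN R R (subspace `[a, b]) (from_subspace `[a, b] f)); apply: cf.
move=> t tab ts; have [D [dD D0]] := hd t tab ts; exists (- D); split.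
  exact: is_deriveN.
by rewrite oppr_le0.
Qed.

Lemma xD_bound (x D K : R) : 0 <= K -> `|D| <= K * `|x| ->
  x * D <= K * (x * x) /\ - (K * (x * x)) <= x * D.
Proof.
move=> K0 hD.
have h1 : `|x * D| <= K * (x * x).
  have hx : `|x| * `|x| = x * x by rewrite -normrM ger0_norm // -expr2 sqr_ge0.
  rewrite normrM; have := normr_ge0 x; have := normr_ge0 D; nra.
have := ler_norm (x * D); have := ler_norm (- (x * D)); rewrite normrN.
move: h1; lra.
Qed.

Lemma gron (e : R -> R) (T : \bar R) (K : R) : 0 <= K ->
  {within time_dom T, continuous e} ->
  (forall T', exists s : seq R, forall t, 0 < t -> (t%:E < T)%E -> t < T' ->
     t \notin s -> exists D, is_derive t 1 e D /\ `|D| <= K * `|e t|) ->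
  forall t, time_dom T t -> (e 0 = 0 -> e t = 0) /\ (e 0 != 0 -> e t != 0).
Proof.
move=> K0 ce hd t [t0 tT].
have [s Hs] := hd (t + 1).
have cet : {within `[0, t], continuous e}.
  apply: continuous_subspaceW ce => x /=; rewrite in_itv /= => /andP[x0 xt]; split => //.
  by apply: le_trans tT; rewrite lee_fin.
have Hd : forall u, 0 < u < t -> u \notin s ->
    exists D, is_derive u 1 e D /\ `|D| <= K * `|e u|.
  move=> u /andP[u0 ut] us; apply: Hs => //.
    by apply: lt_le_trans tT; rewrite lte_fin.
  by apply: (lt_trans ut); rewrite ltrDl ltr01.
split.
- move=> e0.
  have h : expR (- (2 * K) * t) * (e t * e t) <= expR (- (2 * K) * 0) * (e 0 * e 0).
    apply: (@mono R (fun s => expR (- (2 * K) * s) * (e s * e s)) s 0 t t0 (@cw R e _ _ cet)).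
    move=> u ut us; have [D [dD hD]] := Hd u ut us.
    eexists; split; first exact: dw.
    have [h1 h2] := xD_bound K0 hD.
    have := expR_gt0 (- (2 * K) * u); nra.
  move: h; rewrite e0 !mulr0 => h.
  have : e t * e t = 0.
    apply/eqP; rewrite eq_le; apply/andP; split; last by rewrite -expr2 sqr_ge0.
    have := expR_gt0 (- (2 * K) * t); nra.
  by move/eqP; rewrite mulf_eq0 orbb => /eqP.
- move=> e0.
  have h : expR ((2 * K) * 0) * (e 0 * e 0) <= expR ((2 * K) * t) * (e t * e t).
    apply: (@mono_up (fun s => expR ((2 * K) * s) * (e s * e s)) s 0 t t0 (@cw R e _ _ cet)).
    move=> u ut us; have [D [dD hD]] := Hd u ut us.
    eexists; split; first exact: dw.
    have [h1 h2] := xD_bound K0 hD.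
    have := expR_gt0 ((2 * K) * u); nra.
  move: h; rewrite mulr0 expR0 mul1r => h; apply/negP => /eqP et.
  move: h; rewrite et !mulr0 => h.
  have : 0 < e 0 * e 0 by rewrite -expr2 exprn_even_gt0 //.
  lra.
Qed.
End Gron2.
Section Dot.
Variable R : realType.
Local Open Scope classical_set_scope.

Lemma dot_sum n (beta x : 'cV[R]_n) :
  (beta^T *m x) 0 0 = \sum_(j < n) beta j 0 * x j 0.
Proof. by rewrite mxE; apply: eq_bigr => j _; rewrite mxE. Qed.

Lemma dot_cont n (beta : 'cV[R]_n) : continuous (fun x : 'cV[R]_n => (beta^T *m x) 0 0).
Proof.
have -> : (fun x : 'cV[R]_n => (beta^T *m x) 0 0) =
   \sum_(j < n) (fun x : 'cV[R]_n => beta j 0 * x j 0).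
  by rewrite fct_sumE; apply/funext => x; rewrite dot_sum.
elim/big_ind: _.
- exact: cst_continuous.
- by move=> f g cf cg x; apply: continuousD; [apply: cf|apply: cg].
move=> j _ x.
apply: (@continuousM R _ (fun _ => beta j 0) (fun x : 'cV[R]_n => x j 0)).
  exact: cst_continuous.
exact: coord_continuous.
Qed.

Lemma is_derive_dot n (beta : 'cV[R]_n) (phi : R -> 'cV[R]_n) (t : R) (D : 'cV[R]_n) :
  is_derive t 1 phi D ->
  is_derive t 1 (fun s => (beta^T *m phi s) 0 0) ((beta^T *m D) 0 0).
Proof.
move=> hD.
have dphi : derivable phi t 1 := @ex_derive _ _ _ _ _ _ _ hD.
have ent : forall j, is_derive t 1 (fun s => phi s j 0) (D j 0).
  have dm := (derivable_mxP phi t 1).1 dphi.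
  move=> j; apply: DeriveDef; first exact: (dm j 0).
  have := derive_mx dphi; rewrite derive_val => /matrixP /(_ j 0).
  by rewrite mxE => ->.
have hs := @is_derive_sum R R R n (fun j => fun s => beta j 0 * phi s j 0) t 1
   (fun j => beta j 0 * D j 0) (fun j => is_deriveZ (beta j 0) (ent j)).
have -> : (fun s => (beta^T *m phi s) 0 0) =
   \sum_(j < n) (fun s => beta j 0 * phi s j 0).
  by rewrite fct_sumE; apply/funext => x; rewrite dot_sum.
by apply: (is_derive_eq hs); rewrite dot_sum.
Qed.

Lemma cont_dot n (beta : 'cV[R]_n) (phi : R -> 'cV[R]_n) (A : set R) c :
  {within A, continuous phi} ->
  {within A, continuous (fun s => (beta^T *m phi s) 0 0 - c)}.
Proof.
move=> cphi x.
apply: (@continuousD R R (subspace A) (from_subspace A (fun s => (beta^T *m phi s) 0 0)) (fun _ => - c)).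
  apply: (@continuous_comp _ _ _ (from_subspace A phi) (fun y : 'cV[R]_n => (beta^T *m y) 0 0)).
    exact: cphi.
  exact: dot_cont.
exact: cst_continuous.
Qed.
End Dot.
Lemma entryD (R : realFieldType) m p (A B : 'M[R]_(m,p)) i j :
  (A + B) i j = A i j + B i j.
Proof. by rewrite !mxE. Qed.

Theorem lemma4 (R : realType) (n m : nat) (P : set 'cV[R]_n)
  (A : 'M[R]_n) (a : 'cV[R]_n) (B : 'M[R]_(n, m)) (beta z : 'cV[R]_n) :
  full_dim_polytope P ->
  (\rank B).+1 = n ->
  controllable A B ->
  interior P `&` Oset A a B = set0 ->
  dotv beta beta = 1 ->
  beta^T *m B = 0 ->
  (forall x, P x -> dotv beta (A *m x + a) <= 0) ->
  P z ->
  Bz beta z `&` P `<=` Oset A a B ->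
  P_invariant A a B P (Bz beta z `&` P) /\
  P_invariant A a B P (P `\` Bz beta z).
Proof.
move=> [[k [C [d HPe]]] _] _ _ _ _ hB _ Pz hF.
have PE : forall x, P x <-> (forall i, (C *m x) i 0 <= d i 0).
  by move=> x; rewrite HPe.
have Oz : forall x, Oset A a B x -> (beta^T *m (A *m x + a)) 0 0 = 0.
  by move=> x [v ->]; rewrite mulmxA hB mul0mx mxE.
have Fz : (beta^T *m (A *m z + a)) 0 0 = 0 by apply: Oz; apply: hF; split.
have Lz : forall x, (beta^T *m (A *m x + a)) 0 0 =
    ((beta^T *m A) *m (x - z)) 0 0 + (beta^T *m (A *m z + a)) 0 0.
  move=> x; rewrite !mulmxDr !mulmxN !mulmxA !entryD entryN; ring.
have HL : forall x : 'cV[R]_n, (forall i, (C *m x) i 0 <= d i 0) ->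
    (beta^T *m x) 0 0 = (beta^T *m z) 0 0 ->
    ((beta^T *m A) *m x) 0 0 = ((beta^T *m A) *m z) 0 0.
  move=> x Px bx.
  have Ox := Oz x (hF x (conj bx ((PE x).2 Px))).
  move: Ox Fz; rewrite Lz !mulmxBr !entryB; lra.
have [K HK] := poly_bound ((PE z).1 Pz) HL.
have key : forall x0 u T phi, trajectory A a B u x0 T phi ->
    (forall t, time_dom T t -> P (phi t)) ->
    forall t, time_dom T t ->
    (dotv beta x0 - dotv beta z = 0 -> dotv beta (phi t) - dotv beta z = 0) /\
    (dotv beta x0 - dotv beta z != 0 -> dotv beta (phi t) - dotv beta z != 0).
  move=> x0 u T phi [phi0 [cphi dphi]] inP t tT.
  rewrite -phi0.
  apply: (@gron R (fun s => (beta^T *m phi s) 0 0 - (beta^T *m z) 0 0) T `|K|) => //.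
  - exact: cont_dot.
  move=> T'; have [s Hs] := dphi T'; exists s => t' t0 tT' tT'' ts.
  have hD := Hs t' t0 tT' tT'' ts.
  exists ((beta^T *m (A *m phi t' + a + B *m u t')) 0 0); split.
    have := is_deriveB (is_derive_dot beta hD) (is_derive_cst ((beta^T *m z) 0 0) t' 1).
    by move=> H; apply: (is_derive_eq H); rewrite subr0.
  have Pt : P (phi t').
    by apply: inP; split; [exact: ltW|exact: ltW].
  have := HK (phi t') ((PE _).1 Pt).
  have E : (beta^T *m (A *m phi t' + a + B *m u t')) 0 0 = (beta^T *m (A *m phi t' + a)) 0 0.
    by rewrite [in LHS]mulmxDr entryD (mulmxA beta^T B) hB mul0mx [X in _ + X]mxE addr0.
  rewrite E Lz Fz addr0.
  rewrite !mulmxBr !entryB.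
  have := ler_norm K; have := normr_ge0 ((beta^T *m phi t') 0 0 - (beta^T *m z) 0 0).
  nra.
split.
- split; first by move=> x [].
  move=> x0 [bx0 Px0] u _ T _ phi tr inP t tT; split; last exact: inP.
  have [h _] := key x0 u T phi tr inP t tT.
  by apply/eqP; rewrite -subr_eq0; apply/eqP; apply: h; rewrite /Bz bx0 subrr.
- split; first by move=> x [].
  move=> x0 [Px0 bx0] u _ T _ phi tr inP t tT; split; first exact: inP.
  have [_ h] := key x0 u T phi tr inP t tT.
  move=> bt; suff : dotv beta x0 - dotv beta z != 0 by move/h; rewrite bt subrr eqxx.
  by rewrite subr_eq0; apply/eqP.
Qed.
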